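(* Consider the aggregative game of the context with a single deceptive player $d$ deceiving the set $\mathcal{D}\subset[N]\setminus\{d\}$, where $\alpha_{i,d}\neq0$ for all $i\in\mathcal{D}$, and assume $K_j>0$ for all $j\in[N]$. Define $$\delta^-=\max_{i\in\mathcal{D},\,\alpha_{i,d}>0}\Big(\frac{-\kappa_i}{\alpha_{i,d}}+\frac{1}{\alpha_{i,d}}\sum_{k\neq i}\frac{|\alpha_{i,k}+\alpha_{k,i}|}{2}\Big),\qquad \delta^+=\min_{i\in\mathcal{D},\,\alpha_{i,d}<0}\Big(\frac{-\kappa_i}{\alpha_{i,d}}+\frac{1}{\alpha_{i,d}}\sum_{k\neq i}\frac{|\alpha_{i,k}+\alpha_{k,i}|}{2}\Big).$$ Then for every $\delta$ in the interval $I$ below, the map $x\mapsto\gamma(x,\delta)$ is strongly monotone on $\mathbb{R}^N$: $I=(\delta^-,\infty)$ if $\alpha_{i,d}>0$ for all $i\in\mathcal{D}$; $I=(-\infty,\delta^+)$ if $\alpha_{i,d}<0$ for all $i\in\mathcal{D}$; and $I=(\delta^-,\delta^+)$ otherwise.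
   Context: Aggregative game: $J_i(x)=c_i(x_i)+l_i(x_{-i})x_i$ for $i\in[N]$, where $c_i:\mathbb{R}\to\mathbb{R}$ is twice differentiable with $c_i''\ge\kappa_i>0$ ($\kappa_i$-strongly convex) and $l_i(x_{-i})=\sum_{k\neq i}\alpha_{i,k}x_k$ with constants $\alpha_{i,k}\in\mathbb{R}$ ($\alpha_{k,k}:=0$); $x_{-i}$ is the vector of actions of players other than $i$. Pseudogradient $\mathcal{G}(x)$ has entries $\mathcal{G}_i(x)=c_i'(x_i)+l_i(x_{-i})$. $K_j=\kappa_j-\sum_{k\neq j}\frac{|\alpha_{j,k}+\alpha_{k,j}|}{2}$. With deceptive player $d$ and deceived set $\mathcal{D}$, $\Lambda$ is the $N\times N$ diagonal matrix with $(i,i)$ entry $\alpha_{i,d}$ if $i\in\mathcal{D}$ and $0$ otherwise, and $\gamma(x,\delta)=\mathcal{G}(x)+\delta\Lambda x$. A map $F:\mathbb{R}^N\to\mathbb{R}^N$ is strongly monotone if there is $\kappa>0$ with $(F(x)-F(y))^\top(x-y)\ge\kappa|x-y|^2$ for all $x,y$. *)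

(* Defs.v *)
From mathcomp Require Import all_boot all_order all_algebra.
From mathcomp Require Import all_classical all_reals all_analysis.
Set Implicit Arguments. Unset Strict Implicit. Unset Printing Implicit Defensive.
Import Order.TTheory GRing.Theory Num.Theory.
Local Open Scope ring_scope.

Section Game.
Variables (R : realType) (N : nat).

Definition agg_l (alpha : 'I_N -> 'I_N -> R) (x : 'I_N -> R) (i : 'I_N) : R :=
  \sum_(k < N | k != i) alpha i k * x k.

Definition pseudograd (c : 'I_N -> R -> R) (alpha : 'I_N -> 'I_N -> R)
  (x : 'I_N -> R) : 'I_N -> R :=
  fun i => derive1 (c i) (x i) + agg_l alpha x i.

Definition Lambda_app (alpha : 'I_N -> 'I_N -> R) (d : 'I_N) (D : {set 'I_N})
  (x : 'I_N -> R) : 'I_N -> R :=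
  fun i => if i \in D then alpha i d * x i else 0.

Definition gamma_map (c : 'I_N -> R -> R) (alpha : 'I_N -> 'I_N -> R) (d : 'I_N)
  (D : {set 'I_N}) (delta : R) (x : 'I_N -> R) : 'I_N -> R :=
  fun i => pseudograd c alpha x i + delta * Lambda_app alpha d D x i.

Definition offdiag (alpha : 'I_N -> 'I_N -> R) (j : 'I_N) : R :=
  \sum_(k < N | k != j) `|alpha j k + alpha k j| / 2.

Definition Kcoef (kappa : 'I_N -> R) (alpha : 'I_N -> 'I_N -> R) (j : 'I_N) : R :=
  kappa j - offdiag alpha j.

(* the quantity -kappa_i/alpha_{i,d} + (1/alpha_{i,d}) sum_{k<>i} |..|/2 whose
   max (over alpha_{i,d}>0) is delta^- and min (over alpha_{i,d}<0) is delta^+ *)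
Definition dbound (kappa : 'I_N -> R) (alpha : 'I_N -> 'I_N -> R) (d i : 'I_N) : R :=
  - kappa i / alpha i d + (1 / alpha i d) * offdiag alpha i.

Definition above_delta_minus kappa alpha d (D : {set 'I_N}) (delta : R) : Prop :=
  forall i, i \in D -> 0 < alpha i d -> dbound kappa alpha d i < delta.

Definition below_delta_plus kappa alpha d (D : {set 'I_N}) (delta : R) : Prop :=
  forall i, i \in D -> alpha i d < 0 -> delta < dbound kappa alpha d i.

Definition in_I kappa alpha d (D : {set 'I_N}) (delta : R) : Prop :=
  if [forall i in D, 0 < alpha i d] then above_delta_minus kappa alpha d D delta
  else if [forall i in D, alpha i d < 0] then below_delta_plus kappa alpha d D delta
  else above_delta_minus kappa alpha d D delta /\ below_delta_plus kappa alpha d D delta.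

Definition strongly_monotone (F : ('I_N -> R) -> ('I_N -> R)) : Prop :=
  exists k : R, 0 < k /\ forall x y : 'I_N -> R,
    \sum_(i < N) (F x i - F y i) * (x i - y i) >= k * \sum_(i < N) (x i - y i) ^+ 2.

End Game.

(* Main.v *)
Require Import Defs.
From mathcomp Require Import all_boot all_order all_algebra.
From mathcomp Require Import all_classical all_reals all_analysis.
From mathcomp Require Import ring lra.
Import Order.TTheory GRing.Theory Num.Theory.
Local Open Scope ring_scope.

Lemma pt_bound (R : realType) (p a b : R) :
  - (`|p| / 2 * (a ^+ 2 + b ^+ 2)) <= p * a * b.
Proof.
case: (lerP 0 p) => hp.
- rewrite ger0_norm //.
  have h := mulr_ge0 hp (sqr_ge0 (a + b)). nra.
- rewrite ltr0_norm //.
  have hp' : 0 <= - p by rewrite oppr_ge0 ltW.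
  have h := mulr_ge0 hp' (sqr_ge0 (a - b)). nra.
Qed.

Lemma cross (R : realType) (N : nat) (alpha : 'I_N -> 'I_N -> R) (u : 'I_N -> R) :
  (forall k, alpha k k = 0) ->
  - \sum_(i < N) offdiag alpha i * u i ^+ 2 <= \sum_(i < N) agg_l alpha u i * u i.
Proof.
move=> a0.
have eA i : agg_l alpha u i = \sum_(k < N) alpha i k * u k.
  by rewrite [RHS](bigD1 i) //= a0 mul0r add0r.
have eO i : offdiag alpha i = \sum_(k < N) `|alpha i k + alpha k i| / 2.
  by rewrite [RHS](bigD1 i) //= a0 addr0 normr0 mul0r add0r.
under [X in _ <= X]eq_bigr do rewrite eA mulr_suml.
under [in X in - X <= _]eq_bigr do rewrite eO mulr_suml.
set T := \sum_i \sum_k _.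
set S := \sum_i \sum_k _.
have hS : 2 * S = \sum_(i < N) \sum_(k < N) (alpha i k + alpha k i) * u i * u k.
  rewrite (_ : 2 * S = S + S); last by ring.
  rewrite {2}/S exchange_big /S -big_split /=.
  apply: eq_bigr => i _; rewrite -big_split /=; apply: eq_bigr => k _; ring.
have hT : T = \sum_(i < N) \sum_(k < N) `|alpha i k + alpha k i| / 2 * u k ^+ 2.
  rewrite /T exchange_big /=; apply: eq_bigr => i _; apply: eq_bigr => k _.
  by rewrite (addrC (alpha k i)).
have h2 : - (2 * T) <= 2 * S.
  rewrite hS.
  have -> : 2 * T = \sum_(i < N) \sum_(k < N)
     `|alpha i k + alpha k i| / 2 * (u i ^+ 2 + u k ^+ 2).
    rewrite (_ : 2 * T = T + T); last by ring.
    rewrite {2}hT /T -big_split /=.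
    apply: eq_bigr => i _; rewrite -big_split /=; apply: eq_bigr => k _; ring.
  rewrite -sumrN; apply: ler_sum => i _; rewrite -sumrN; apply: ler_sum => k _.
  exact: pt_bound.
lra.
Qed.
Lemma inI_both (R : realType) (N : nat) kappa (alpha : 'I_N -> 'I_N -> R) d
  (D : {set 'I_N}) delta :
  in_I kappa alpha d D delta -> forall i, i \in D ->
  (0 < alpha i d -> dbound kappa alpha d i < delta) /\
  (alpha i d < 0 -> delta < dbound kappa alpha d i).
Proof.
rewrite /in_I; case: ifP => [/forallP hall | _].
  move=> h i iD; split; first exact: h.
  move=> hn; have := hall i; rewrite iD /= => hp; lra.
case: ifP => [/forallP hall | _].
  move=> h i iD; split; last exact: h.
  move=> hn; have := hall i; rewrite iD /= => hp; lra.
move=> [h1 h2] i iD; split; [exact: h1 | exact: h2].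
Qed.

Lemma minpos (R : realType) (N : nat) (f : 'I_N -> R) :
  (forall i, 0 < f i) ->
  0 < \big[Num.min/1]_(i < N) f i /\ forall i, \big[Num.min/1]_(i < N) f i <= f i.
Proof.
move=> hf; split.
  by apply: (big_ind (fun x => 0 < x)) => // a b ha hb; rewrite lt_min ha hb.
move=> i; rewrite (bigD1 i) //=; rewrite ge_min lexx //.
Qed.
Lemma mono_aux (R : realType) (f : R -> R) (k : R) :
  (forall x, derivable f x 1) -> (forall x, k <= derive1 f x) ->
  forall a b, a <= b -> k * (b - a) <= f b - f a.
Proof.
move=> df hk a b ab.
have [c _ ->] := @MVT_segment R f (derive1 f) a b ab
  (fun x _ => ltac:(rewrite derive1E; exact: derivableP))
  (derivable_within_continuous (fun x _ => df x)).
by rewrite ler_wpM2r ?subr_ge0.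
Qed.

Lemma mono_c (R : realType) (f : R -> R) (k : R) :
  (forall x, derivable f x 1) -> (forall x, k <= derive1 f x) ->
  forall a b, k * (a - b) ^+ 2 <= (f a - f b) * (a - b).
Proof.
move=> df hk a b; case: (leP b a) => ab.
- have := @mono_aux _ _ _ df hk _ _ ab; have : 0 <= a - b by rewrite subr_ge0.
  move=> h1 h2; rewrite expr2 mulrA; exact: ler_wpM2r.
- have := @mono_aux _ _ _ df hk _ _ (ltW ab); have : 0 <= b - a by rewrite subr_ge0 ltW.
  move=> h1 h2.
  have -> : (f a - f b) * (a - b) = (f b - f a) * (b - a) by ring.
  have -> : k * (a - b) ^+ 2 = k * (b - a) * (b - a) by ring.
  exact: ler_wpM2r.
Qed.

Arguments inI_both {R N kappa alpha d D delta}.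
Arguments minpos {R N f}.
Arguments mono_c {R f k}.
Arguments cross {R N alpha} u.

Theorem lemma4 (R : realType) (N : nat)
  (c : 'I_N -> R -> R) (kappa : 'I_N -> R) (alpha : 'I_N -> 'I_N -> R)
  (d : 'I_N) (D : {set 'I_N}) :
  (* c_i twice differentiable with c_i'' >= kappa_i > 0 *)
  (forall i x, derivable (c i) x 1 /\ derivable (derive1 (c i)) x 1) ->
  (forall i, 0 < kappa i) ->
  (forall i x, kappa i <= derive1n 2 (c i) x) ->
  (forall k, alpha k k = 0) ->
  d \notin D ->
  (forall i, i \in D -> alpha i d != 0) ->
  (forall j, 0 < Kcoef kappa alpha j) ->
  forall delta : R, in_I kappa alpha d D delta ->
  strongly_monotone (gamma_map c alpha d D delta).
Proof.
move=> hder hk h2 a0 dD anz hK delta hI.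
pose e i := if i \in D then delta * alpha i d else 0.
pose coef i := kappa i - offdiag alpha i + e i.
have cpos i : 0 < coef i.
  rewrite /coef /e; case: ifP => iD; last by rewrite addr0; exact: hK.
  have [hp hn] := inI_both hI i iD.
  have an := anz i iD.
  have db : dbound kappa alpha d i * alpha i d = - kappa i + offdiag alpha i.
    by rewrite /dbound; field.
  case: (ltgtP (alpha i d) 0) => ha.
  - have := hn ha; rewrite -(ltr_nM2r ha) db => h; lra.
  - have := hp ha; rewrite -(ltr_pM2r ha) db => h; lra.
  - by rewrite ha eqxx in an.
have [kpos kle] := minpos cpos.
exists (\big[Num.min/1]_(i < N) coef i); split => // x y.
pose u i := x i - y i.
have eT i : (gamma_map c alpha d D delta x i - gamma_map c alpha d D delta y i)
   * (x i - y i) = (derive1 (c i) (x i) - derive1 (c i) (y i)) * (x i - y i)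
   + agg_l alpha u i * u i + e i * u i ^+ 2.
  have ea : agg_l alpha x i - agg_l alpha y i = agg_l alpha u i.
    by rewrite /agg_l -sumrB; apply: eq_bigr => k _; rewrite /u; ring.
  rewrite /gamma_map /pseudograd /Lambda_app /e /u.
  move: ea; rewrite /u => ea.
  case: (i \in D).
  - rewrite -ea; ring.
  - rewrite -ea; ring.
rewrite (eq_bigr _ (fun i _ => eT i)) !big_split /=.
have hc : \sum_(i < N) kappa i * u i ^+ 2 <=
   \sum_(i < N) (derive1 (c i) (x i) - derive1 (c i) (y i)) * (x i - y i).
  apply: ler_sum => i _; apply: mono_c.
  - by move=> z; case: (hder i z).
  - by move=> z; exact: (h2 i z).
have hx := cross u a0.
have hs : \big[Num.min/1]_(i < N) coef i * \sum_(i < N) (x i - y i) ^+ 2 <=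
   \sum_(i < N) coef i * u i ^+ 2.
  rewrite mulr_sumr; apply: ler_sum => i _; apply: ler_wpM2r; first exact: sqr_ge0.
  exact: kle.
have ecf : \sum_(i < N) coef i * u i ^+ 2 = \sum_(i < N) kappa i * u i ^+ 2
   - \sum_(i < N) offdiag alpha i * u i ^+ 2 + \sum_(i < N) e i * u i ^+ 2.
  rewrite -sumrB -big_split /=; apply: eq_bigr => i _; rewrite /coef; ring.
rewrite ecf in hs.
lra.
Qed.
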